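(* In any execution of the algorithm described in the context, for every round $r>0$, every non-faulty process $p_i$ eventually receives enough valid messages to satisfy the $\mathsf{is\_valid}$ predicate for round $r$; that is, eventually there exist $v\in\{0,1\}$ and $S\subseteq\mathit{aux\_values}_i$ with $\mathsf{is\_valid}(r,v,S)$ true.
   Context: Model. There are $n$ processes $p_1,\dots,p_n$ ($i$ is the index of $p_i$) communicating over an asynchronous, reliable, point-to-point network: every pair of processes is connected by a channel, message delays are finite but unbounded, and the network does not lose, duplicate, modify or create messages. ''Broadcast'' means sending the message to every process (including oneself). Messages are signed with unforgeable digital signatures ($\langle m\rangle_j$ denotes message $m$ signed by $p_j$); malformed messages or messages with invalid signatures are ignored. Up to $t$ processes are Byzantine (faulty) and may behave arbitrarily and collude, but cannot forge signatures of other processes; the remaining processes are non-faulty and follow the algorithm. It is assumed that $t<n/3$. Algorithm. Messages are of the form $\mathrm{AUX}[r](v)$ with round $r\in\mathbb{N}$ and $v\in\{0,1\}$, sent as a pair $(\langle \mathrm{AUX}[r](v)\rangle_j,\mathit{proofs})$ where $\mathit{proofs}$ is a set of signed AUX messages. The predicate $\mathsf{is\_valid}(r,est,\mathit{proofs})$ is: if $r=0$ return true; if $r=1$ return true iff $\mathit{proofs}$ contains signed $\mathrm{AUX}[0](est)$ messages from $t+1$ different processes; otherwise let $b=(r-1)\bmod 2$; if $est=b$, return true iff ($r=2$ and $\mathit{proofs}$ contains signed $\mathrm{AUX}[0](b)$ from $t+1$ different processes) or ($\mathit{proofs}$ contains signed $\mathrm{AUX}[r-2](b)$ from $n-t$ different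 processes); if $est\neq b$, return true iff $\mathit{proofs}$ contains signed $\mathrm{AUX}[r-1](\neg b)$ from $n-t$ different processes. Each process $p_i$ with proposal $v_i$ keeps a round counter $r_i$, a set $\mathit{aux\_values}_i$ of signed AUX messages, and timers indexed by naturals (timers $2r$ and $2r+1$ belong to round $r$; starting an already started or expired timer does nothing). It sets $r_i:=0$, $\mathit{aux\_values}_i:=\emptyset$, broadcasts $(\langle\mathrm{AUX}[0](v_i)\rangle_i,\emptyset)$, then repeats forever: (1) $r_i:=r_i+1$; (2) if $i=r_i\bmod n$ (coordinator), run Broadcast; (3) start timer $2r_i$ and wait until it expires; (4) if $i\ne r_i\bmod n$, run Broadcast; (5) wait until $\mathit{aux\_values}_i$ contains round-$r_i$ AUX messages from $n-t$ different processes; (6) start timer $2r_i+1$ and wait until it expires; (7) with $b_i=r_i\bmod 2$, if $\mathit{aux\_values}_i$ contains $\mathrm{AUX}[r_i](b_i)$ from $n-t$ different processes, decide $b_i$ (if not yet decided). Broadcast: let $\mathit{values}_i$ be the set of $v\in\{0,1\}$ such that $\mathsf{is\_valid}(r_i,v,S)$ holds for some $S\subseteq\mathit{aux\_values}_i$; let $bv=(r_i+1)\bmod 2$; if $p_i$ received from $p_{r_i\bmod n}$ a message $(\langle\mathrm{AUX}[r_i](p)\rangle_{r_i\bmod n},\cdot)$ with $p\in\mathit{values}_i$ then $est_i:=p$, else if $bv\in\mathit{values}_i$ then $est_i:=bv$, else $est_i:=\neg bv$; choose $\mathit{proofs}\subseteq\mathit{aux\_values}_i$ with $\mathsf{is\_valid}(r_i,est_i,\mathit{proofs})$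 and broadcast $(\langle\mathrm{AUX}[r_i](est_i)\rangle_i,\mathit{proofs})$. On receiving $(\langle\mathrm{AUX}[r_j](est_j)\rangle_j,\mathit{proofs})$: if $\mathsf{is\_valid}(r_j,est_j,\mathit{proofs})$, add the signed message and the messages of $\mathit{proofs}$ needed to satisfy the predicate to $\mathit{aux\_values}_i$ (such messages are called valid). Then let $\rho_i$ be the largest round for which $\mathit{aux\_values}_i$ contains messages from $t+1$ different processes, and set every timer with index $\le 2\rho_i$ to expired. *)

(* Defs.v *)
From mathcomp Require Import all_boot.
Set Implicit Arguments. Unset Strict Implicit. Unset Printing Implicit Defensive.

(* program counter of a non-faulty process:
   PInit  : has not yet broadcast AUX[0](v_i)
   PStart : about to execute steps (1)-(3) of the next round
   PWait1 : waiting for timer 2r (step 3), then step (4)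
   PWait2 : waiting for n-t round-r messages (step 5), then step (6)
   PWait3 : waiting for timer 2r+1 (step 6), then step (7) *)
Inductive pcT := PInit | PStart | PWait1 | PWait2 | PWait3.

Section Model.
Variables (n t : nat).

(* a signed message <AUX[r](v)>_j is the triple (j, r, v); signatures are
   unforgeable, modelled globally in [step] below. *)
Definition smsg := ('I_n * nat * bool)%type.
Definition signer (m : smsg) : 'I_n := m.1.1.
Definition mround (m : smsg) : nat := m.1.2.
Definition mval (m : smsg) : bool := m.2.

(* what travels: (<AUX[r](v)>_j, proofs) *)
Definition payload := (smsg * seq smsg)%type.
Definition packet := ('I_n * 'I_n * payload)%type.
Definition psrc (p : packet) : 'I_n := p.1.1.
Definition pdst (p : packet) : 'I_n := p.1.2.
Definition ppl (p : packet) : payload := p.2.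

Definition nsigners (S : seq smsg) (P : smsg -> bool) : nat :=
  #|[set j : 'I_n | has (fun m => (signer m == j) && P m) S]|.

Definition has_from (S : seq smsg) (k : nat) (b : bool) (m : nat) : bool :=
  m <= nsigners S (fun x => (mround x == k) && (mval x == b)).

(* values 0/1 are encoded as false/true; x mod 2 is [odd x] *)
Definition is_valid (r : nat) (est : bool) (S : seq smsg) : bool :=
  if r == 0 then true
  else if r == 1 then has_from S 0 est t.+1
  else let b := odd r.-1 in
    if est == b then ((r == 2) && has_from S 0 b t.+1) || has_from S (r - 2) b (n - t)
    else has_from S r.-1 (~~ b) (n - t).

Definition relevant (r : nat) (est : bool) (x : smsg) : bool :=
  if r == 0 then false
  else if r == 1 then (mround x == 0) && (mval x == est)
  else let b := odd r.-1 in
    if est == b then ((r == 2) && (mround x == 0) && (mval x == b))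
                     || ((mround x == r - 2) && (mval x == b))
    else (mround x == r.-1) && (mval x == ~~ b).

Definition needed (r : nat) (est : bool) (S : seq smsg) : seq smsg :=
  filter (relevant r est) S.

Record lstate := LState {
  pc : pcT;
  rnd : nat;
  aux : seq smsg;
  started : nat -> bool;
  expired : nat -> bool;
  recvd : seq ('I_n * payload);
  decided : option bool }.

Definition init_lstate : lstate :=
  LState PInit 0 [::] (fun _ => false) (fun _ => false) [::] None.

(* processes are identified with 0,...,n-1; p_i coordinates round r iff i = r mod n *)
Definition is_coord (i : 'I_n) (r : nat) : bool := val i == r %% n.

Definition in_values (s : lstate) (r : nat) (v : bool) : Prop :=
  exists S : seq smsg, {subset S <= aux s} /\ is_valid r v S.

Definition coord_sent (s : lstate) (r : nat) (p : bool) : Prop :=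
  exists (c : 'I_n) (pr : seq smsg), is_coord c r /\ (c, ((c, r, p), pr)) \in recvd s.

Definition bcast (i : 'I_n) (s : lstate) (r : nat) (pl : payload) : Prop :=
  let bv := odd r.+1 in
  exists est : bool,
    ((coord_sent s r est /\ in_values s r est)
     \/ ((forall p, coord_sent s r p -> ~ in_values s r p) /\
         ((in_values s r bv /\ est = bv) \/ (~ in_values s r bv /\ est = ~~ bv)))) /\
    pl.1 = (i, r, est) /\ {subset pl.2 <= aux s} /\ is_valid r est pl.2.

Definition set_started (s : lstate) (k : nat) (p : pcT) : lstate :=
  LState p (rnd s) (aux s) (fun j => started s j || (j == k)) (expired s)
         (recvd s) (decided s).

(* one atomic local step of non-faulty p_i with proposal vi;
   out = Some pl iff the step broadcasts pl *)
Definition lstep (i : 'I_n) (vi : bool) (s s' : lstate) (out : option payload) : Prop :=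
  match pc s with
  | PInit =>
      s' = LState PStart 0 (aux s) (started s) (expired s) (recvd s) (decided s)
      /\ out = Some ((i, 0, vi), [::])
  | PStart =>
      let r := (rnd s).+1 in
      s' = LState PWait1 r (aux s) (fun j => started s j || (j == 2 * r))
                  (expired s) (recvd s) (decided s)
      /\ (if is_coord i r then exists pl, bcast i s r pl /\ out = Some pl
          else out = None)
  | PWait1 =>
      expired s (2 * rnd s)
      /\ s' = LState PWait2 (rnd s) (aux s) (started s) (expired s) (recvd s) (decided s)
      /\ (if is_coord i (rnd s) then out = None
          else exists pl, bcast i s (rnd s) pl /\ out = Some pl)
  | PWait2 =>
      n - t <= nsigners (aux s) (fun x => mround x == rnd s)
      /\ s' = set_started s (2 * rnd s).+1 PWait3
      /\ out = None
  | PWait3 =>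
      expired s (2 * rnd s).+1
      /\ s' = LState PStart (rnd s) (aux s) (started s) (expired s) (recvd s)
               (if (decided s == None) && has_from (aux s) (rnd s) (odd (rnd s)) (n - t)
                then Some (odd (rnd s)) else decided s)
      /\ out = None
  end.

Definition lenabled (i : 'I_n) (vi : bool) (s : lstate) : Prop :=
  exists s' out, lstep i vi s s' out.

Definition receive (s : lstate) (src : 'I_n) (pl : payload) : lstate :=
  let m := pl.1 in
  let pr := pl.2 in
  let aux' := if is_valid (mround m) (mval m) pr
              then aux s ++ m :: needed (mround m) (mval m) pr else aux s in
  LState (pc s) (rnd s) aux' (started s)
    (fun k => expired s k ||
       has (fun x => (k <= 2 * mround x) &&
                     (t.+1 <= nsigners aux' (fun y => mround y == mround x))) aux')
    (rcons (recvd s) (src, pl)) (decided s).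

Definition expire (s : lstate) (k : nat) : lstate :=
  LState (pc s) (rnd s) (aux s) (started s) (fun j => expired s j || (j == k))
         (recvd s) (decided s).

Record config := Config {
  loc : 'I_n -> lstate;     (* local states (meaningful for non-faulty processes) *)
  net : seq packet;
  sigs : seq smsg }.        (* all signatures ever produced by non-faulty processes *)

Definition init_config : config := Config (fun _ => init_lstate) [::] [::].

Inductive label :=
  | LDeliver of packet
  | LLocal of 'I_n
  | LTimer of 'I_n & nat
  | LByz of seq packet
  | LIdle.

Definition upd (f : 'I_n -> lstate) (i : 'I_n) (x : lstate) : 'I_n -> lstate :=
  fun j => if j == i then x else f j.

Definition bcast_packets (i : 'I_n) (pl : payload) : seq packet :=
  [seq (i, j, pl) | j <- enum 'I_n].

Definition step (faulty : {set 'I_n}) (prop : 'I_n -> bool)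
    (C : config) (l : label) (C' : config) : Prop :=
  match l with
  | LDeliver p =>
      p \in net C /\ net C' = rem p (net C) /\ sigs C' = sigs C /\
      loc C' = (if pdst p \in faulty then loc C
                else upd (loc C) (pdst p) (receive (loc C (pdst p)) (psrc p) (ppl p)))
  | LLocal i =>
      i \notin faulty /\
      exists s' out, lstep i (prop i) (loc C i) s' out /\ loc C' = upd (loc C) i s' /\
        match out with
        | None => net C' = net C /\ sigs C' = sigs C
        | Some pl => net C' = net C ++ bcast_packets i pl /\ sigs C' = rcons (sigs C) pl.1
        end
  | LTimer i k =>
      i \notin faulty /\ started (loc C i) k /\ ~~ expired (loc C i) k /\
      loc C' = upd (loc C) i (expire (loc C i) k) /\ net C' = net C /\ sigs C' = sigs C
  | LByz ps =>
      (* Byzantine processes send arbitrary packets on their own channels,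
         but cannot forge signatures of non-faulty processes *)
      (forall p, p \in ps -> psrc p \in faulty) /\
      (forall p x, p \in ps -> x \in (ppl p).1 :: (ppl p).2 ->
                   signer x \notin faulty -> x \in sigs C) /\
      net C' = net C ++ ps /\ loc C' = loc C /\ sigs C' = sigs C
  | LIdle => C' = C
  end.

Definition execution (faulty : {set 'I_n}) (prop : 'I_n -> bool)
    (C : nat -> config) (lab : nat -> label) : Prop :=
  C 0 = init_config /\
  (forall k, step faulty prop (C k) (lab k) (C k.+1)) /\
  (forall k p, p \in net (C k) -> pdst p \notin faulty ->
     exists k', k <= k' /\ lab k' = LDeliver p) /\
  (forall k (i : 'I_n) j, i \notin faulty -> started (loc (C k) i) j ->
     exists k', k <= k' /\ expired (loc (C k') i) j) /\
  (* weak fairness: non-faulty processes keep taking enabled local steps *)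
  (forall k (i : 'I_n), i \notin faulty ->
     (forall k', k <= k' -> lenabled i (prop i) (loc (C k') i)) ->
     exists k', k <= k' /\ lab k' = LLocal i).

End Model.

(* Main.v *)
Require Import Defs.
From mathcomp Require Import all_boot zify.
From Stdlib Require Import Classical.
Set Implicit Arguments. Unset Strict Implicit. Unset Printing Implicit Defensive.

Section Proof.
Variables (n t : nat) (faulty : {set 'I_n}) (prop : 'I_n -> bool)
    (C : nat -> config n) (lab : nat -> label n).

Lemma in_catl (T : eqType) (x : T) (s1 s2 : seq T) : x \in s1 -> x \in s1 ++ s2.
Proof. by rewrite mem_cat => ->. Qed.

Definition pos (s : lstate n) : nat :=
  match pc s with
  | PInit => 3
  | PStart => 4 * rnd s + 4
  | PWait1 => 4 * rnd s + 1
  | PWait2 => 4 * rnd s + 2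
  | PWait3 => 4 * rnd s + 3
  end.

Definition inv (s : lstate n) : Prop :=
  (pc s = PWait1 -> started s (2 * rnd s)) /\ (pc s = PWait3 -> started s (2 * rnd s).+1) /\
  (pc s = PWait1 \/ pc s = PWait2 \/ pc s = PWait3 -> 0 < rnd s).

Lemma lstep_pos i vi s s' out : @lstep n t i vi s s' out -> pos s' = (pos s).+1.
Proof.
rewrite /lstep /pos; case: (pc s).
- by case=> -> _ /=.
- by case=> -> _ /=; rewrite mulnS; lia.
- by case=> _ [-> _] /=; lia.
- by case=> _ [-> _] /=; lia.
- by case=> _ [-> _] /=; lia.
Qed.

Lemma lstep_mono i vi s s' out : @lstep n t i vi s s' out ->
  {subset aux s <= aux s'} /\ (forall x, expired s x -> expired s' x) /\
  (forall x, started s x -> started s' x) /\ (inv s -> inv s').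
Proof.
rewrite /lstep /inv; case: (pc s).
- case=> -> _ /=; split=> //; split=> //; split=> // _.
  by split; [|split]; move=> h; try discriminate; try (by case: h => [h|[h|h]]; discriminate).
- case=> -> _ /=; split=> //; split=> //; split=> [x ->//|_].
  split; [|split]; move=> h; try discriminate; try (by case: h => [h|[h|h]]; discriminate); by rewrite ?eqxx ?orbT.
- case=> _ [-> _] /=; split=> //; split=> //; split=> // -[A [B D]].
   split; [|split]; move=> h; try discriminate; try (by case: h => [h|[h|h]]; discriminate). exact: (D (or_introl erefl)).
- case=> _ [-> _] /=; split=> //; split=> //; split=> [x ->//|[A [B D]]].
  split; [|split]; move=> h; try discriminate; try (by case: h => [h|[h|h]]; discriminate); [by rewrite eqxx orbT|exact: (D (or_intror (or_introl erefl)))].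
- case=> _ [-> _] /=; split=> //; split=> //; split=> // _.
  by split; [|split]; move=> h; try discriminate; try (by case: h => [h|[h|h]]; discriminate).
Qed.

Lemma receive_mono s src pl :
  let s' := @receive n t s src pl in
  {subset aux s <= aux s'} /\ (forall x, expired s x -> expired s' x) /\
  (forall x, started s x -> started s' x) /\ (inv s -> inv s') /\ pos s' = pos s.
Proof.
rewrite /receive /=; split; last by split=> [x ->//|]; split.
case: ifP => _ x xa //; exact: in_catl.
Qed.

Lemma expire_mono s k :
  let s' := @expire n s k in
  {subset aux s <= aux s'} /\ (forall x, expired s x -> expired s' x) /\
  (forall x, started s x -> started s' x) /\ (inv s -> inv s') /\ pos s' = pos s.
Proof. by rewrite /expire /=; split=> //; split=> [x ->//|]. Qed.


Hypothesis H0 : C 0 = init_config n.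
Hypothesis Hstep : forall k, @step n t faulty prop (C k) (lab k) (C k.+1).

Lemma step_cases k j :
  let s := loc (C k) j in let s' := loc (C k.+1) j in
  s' = s \/ (exists src pl, s' = @receive n t s src pl) \/ (exists x, s' = expire s x) \/
  (exists out, @lstep n t j (prop j) s s' out /\ lab k = LLocal j /\
     match out with None => True | Some pl => net (C k.+1) = net (C k) ++ bcast_packets j pl end).
Proof.
move=> s s'; rewrite /s /s'; have := Hstep k; case: (lab k) => [p|i|i x|ps|] /=.
- case=> _ [_ [_ ->]]; case: ifP => _; first by left.
  rewrite /upd; case: eqP => [->|_]; last by left.
  by right; left; eauto.
- case=> _ [s1 [out [Hl [-> Hn]]]]; rewrite /upd; case: eqP => [E|_]; last by left.
  subst; right; right; right; exists out; split; [exact: Hl|split=> //].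
  case: out Hl Hn => [pl|] _ /=; [by case | done].
- case=> _ [_ [_ [-> _]]]; rewrite /upd; case: eqP => [->|_]; last by left.
  by right; right; left; eauto.
- by case=> _ [_ [_ [-> _]]]; left.
- by move=> ->; left.
Qed.

Lemma step_mono k j :
  let s := loc (C k) j in let s' := loc (C k.+1) j in
  {subset aux s <= aux s'} /\ (forall x, expired s x -> expired s' x) /\
  (forall x, started s x -> started s' x) /\ (inv s -> inv s') /\ pos s <= pos s'.
Proof.
move=> s s'; rewrite /s' /s; case: (step_cases k j) => [->|[[src [pl ->]]|[[x ->]|[out [Hl _]]]]].
- by split=> //; split=> //.
- by case: (receive_mono s src pl) => [? [? [? [? ->]]]].
- by case: (expire_mono s x) => [? [? [? [? ->]]]].
- case: (lstep_mono Hl) => [? [? [? ?]]]; do 4 (split=> //).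
  by rewrite (lstep_pos Hl).
Qed.

Lemma mono k k' j : k <= k' ->
  {subset aux (loc (C k) j) <= aux (loc (C k') j)} /\
  (forall x, expired (loc (C k) j) x -> expired (loc (C k') j) x) /\
  (forall x, started (loc (C k) j) x -> started (loc (C k') j) x) /\
  pos (loc (C k) j) <= pos (loc (C k') j).
Proof.
move/subnK => <-; elim: (k' - k) => [|d [IH1 [IH2 [IH3 IH4]]]]; first by rewrite add0n; do 3 (split=> //).
case: (step_mono (d + k) j) => [A [B [D [_ E]]]].
split; first by move=> x /IH1 /A.
split; first by move=> x /IH2 /B.
split; first by move=> x /IH3 /D.
exact: leq_trans IH4 E.
Qed.

Lemma inv_all k j : inv (loc (C k) j).
Proof.
elim: k => [|k IH]; first by rewrite H0 /inv /=; split; [|split]; move=> h; try discriminate; case: h => [h|[h|h]]; discriminate.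
by case: (step_mono k j) => [_ [_ [_ [/(_ IH) ? _]]]].
Qed.


Hypothesis Hdeliv : forall k p, p \in net (C k) -> pdst p \notin faulty ->
     exists k', k <= k' /\ lab k' = LDeliver p.
Hypothesis Htimer : forall k (i : 'I_n) j, i \notin faulty -> started (loc (C k) i) j ->
     exists k', k <= k' /\ expired (loc (C k') i) j.
Hypothesis Hfair : forall k (i : 'I_n), i \notin faulty ->
     (forall k', k <= k' -> @lenabled n t i (prop i) (loc (C k') i)) ->
     exists k', k <= k' /\ lab k' = LLocal i.

Lemma advance j p : j \notin faulty -> (exists k, p <= pos (loc (C k) j)) ->
  (forall k, pos (loc (C k) j) = p -> exists K, forall k', K <= k' ->
      pos (loc (C k') j) = p -> @lenabled n t j (prop j) (loc (C k') j)) ->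
  exists k, p < pos (loc (C k) j).
Proof.
move=> nf [k0 hk0] Hen.
case: (ltnP p (pos (loc (C k0) j))) => [|hle]; first by eauto.
have e0 : pos (loc (C k0) j) = p by apply/eqP; rewrite eqn_leq hle hk0.
case: (Hen _ e0) => K HK.
apply: NNPP => Hno.
have Hle : forall k, pos (loc (C k) j) <= p.
  by move=> k; rewrite leqNgt; apply/negP => h; apply: Hno; eauto.
have Heq : forall k, maxn k0 K <= k -> pos (loc (C k) j) = p.
  move=> k hk; apply/eqP; rewrite eqn_leq Hle /= -{1}e0.
  by case: (mono j (leq_trans (leq_maxl k0 K) hk)) => [_ [_ [_ ->]]].
case: (@Hfair (maxn k0 K) j nf _) => [k' hk'|k' [hk' Hl]].
  by apply: HK; [exact: leq_trans (leq_maxr _ _) hk'|exact: Heq].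
have := Hstep k'; rewrite Hl /= => -[_ [s' [out [Hls [Hloc _]]]]].
have : pos (loc (C k'.+1) j) = (pos (loc (C k') j)).+1.
  by rewrite Hloc /upd eqxx; exact: lstep_pos Hls.
rewrite (Heq k') //; have := Hle k'.+1; move=> h1 h2; by rewrite h2 ltnn in h1.
Qed.

Lemma crossing j q : 3 < q -> (exists k, q <= pos (loc (C k) j)) ->
  exists k out, pos (loc (C k) j) = q.-1 /\
    @lstep n t j (prop j) (loc (C k) j) (loc (C k.+1) j) out /\
    match out with None => True | Some pl => net (C k.+1) = net (C k) ++ bcast_packets j pl end.
Proof.
move=> q3 [k hk].
have : exists k0, pos (loc (C k0) j) < q <= pos (loc (C k0.+1) j).
  elim: k hk => [|k IH] hk.
    by move: hk; rewrite H0 /= /pos /= leqNgt q3.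
  case: (leqP q (pos (loc (C k) j))) => h; first exact: IH.
  by exists k; rewrite h hk.
case=> k0 /andP [h1 h2].
case: (step_cases k0 j) => [E|[[src [pl E]]|[[x E]|[out [Hls [_ Hn]]]]]].
- by move: h2; rewrite E leqNgt h1.
- by move: h2; case: (receive_mono (loc (C k0) j) src pl) => [_ [_ [_ [_ P]]]]; rewrite E P leqNgt h1.
- by move: h2; case: (expire_mono (loc (C k0) j) x) => [_ [_ [_ [_ P]]]]; rewrite E P leqNgt h1.
- exists k0, out; split=> //.
  move: h2; rewrite (lstep_pos Hls) => h2; idtac.
  lia.
Qed.


Lemma has_filterP (T : Type) (a q : pred T) (S : seq T) :
  (forall x, a x -> q x) -> has a (filter q S) = has a S.
Proof.
move=> H; elim: S => //= x S IH; case qx: (q x) => /=; rewrite IH //.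
by case ax: (a x) => //; rewrite (H _ ax) in qx.
Qed.

Lemma nsigners_filter (S : seq (smsg n)) (P q : smsg n -> bool) :
  (forall x, P x -> q x) -> nsigners (filter q S) P = nsigners S P.
Proof.
move=> H; rewrite /nsigners; apply: eq_card => j; rewrite !inE has_filterP //.
by move=> x /andP [_ /H].
Qed.

Lemma nsigners_mono (S S' : seq (smsg n)) (P : smsg n -> bool) :
  {subset S <= S'} -> nsigners S P <= nsigners S' P.
Proof.
move=> H; apply: subset_leq_card; apply/subsetP => j; rewrite !inE.
by case/hasP => x /H xS' Px; apply/hasP; exists x.
Qed.

Lemma in_values_mono s s' r v : {subset aux s <= aux s'} ->
  @in_values n t s r v -> @in_values n t s' r v.
Proof. by move=> H [S [HS V]]; exists S; split=> // x /HS /H. Qed.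

Lemma bcast_ex j s r : (exists v, @in_values n t s r v) -> exists pl, @bcast n t j s r pl.
Proof.
move=> [v Hv].
have mk : forall e, @in_values n t s r e -> 
   exists pr, {subset pr <= aux s} /\ is_valid t r e pr.
  by move=> e [S [HS V]]; exists S.
case: (classic (exists p, coord_sent s r p /\ @in_values n t s r p)) => [[p [Hc Hp]]|Hno].
  case: (mk _ Hp) => pr [Hpr V]; exists ((j, r, p), pr); exists p; split; first by left.
  by split.
have Hno' : forall p, coord_sent s r p -> ~ @in_values n t s r p.
  by move=> p Hc Hp; apply: Hno; exists p.
case: (classic (@in_values n t s r (odd r.+1))) => Hb.
  case: (mk _ Hb) => pr [Hpr V]; exists ((j, r, odd r.+1), pr); exists (odd r.+1).
  by split; [right; split=> //; left|].
have Hv' : v = ~~ odd r.+1.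
  by case: v Hv; case: (odd r.+1) Hb => //= H1 H2; exfalso; apply: H1.
case: (mk _ (eq_ind _ _ Hv _ Hv')) => pr [Hpr V]; exists ((j, r, ~~ odd r.+1), pr).
by exists (~~ odd r.+1); split; [right; split=> //; right|].
Qed.

Lemma fin_max (P : 'I_n -> nat -> Prop) (s : seq 'I_n) :
  (forall j k k', k <= k' -> P j k -> P j k') ->
  (forall j, j \in s -> exists k, P j k) -> exists K, forall j, j \in s -> P j K.
Proof.
move=> Hm; elim: s => [|x s IH] H; first by exists 0.
case: (H x (mem_head _ _)) => kx Px.
case: IH => [j js|K HK]; first by apply: H; rewrite inE js orbT.
exists (maxn kx K) => j; rewrite inE => /orP [/eqP ->|js].
  exact: Hm (leq_maxl _ _) Px.
exact: Hm (leq_maxr _ _) (HK _ js).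
Qed.


Hypothesis Hf : #|faulty| <= t.
Hypothesis Hn3 : 3 * t < n.

Lemma deliver k j i pl : (j, i, pl) \in net (C k) -> i \notin faulty ->
  is_valid t (mround pl.1) (mval pl.1) pl.2 ->
  exists k', pl.1 \in aux (loc (C k') i) /\
    {subset needed (mround pl.1) (mval pl.1) pl.2 <= aux (loc (C k') i)}.
Proof.
move=> Hin nf V.
case: (@Hdeliv k (j, i, pl) Hin nf) => k' [_ Hl].
have := Hstep k'; rewrite Hl /= => -[_ [_ [_ Hloc]]].
move: Hloc; rewrite /pdst /= (negbTE nf) => /(congr1 (fun f => f i)); rewrite /upd /= eqxx => Hloc.
exists k'.+1; rewrite Hloc /receive /= V; split.
  by rewrite mem_cat in_cons eqxx orbT.
by move=> x xn; rewrite mem_cat in_cons xn !orbT.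
Qed.

Definition Bc (j : 'I_n) (r : nat) : Prop :=
  exists k pl est, pl.1 = (j, r, est) /\ is_valid t r est pl.2 /\
    forall i, (j, i, pl) \in net (C k).

Lemma collect r : (forall j, j \notin faulty -> Bc j r) ->
  forall i, i \notin faulty -> exists K, forall j, j \notin faulty ->
    exists est pr, (j, r, est) \in aux (loc (C K) i) /\ is_valid t r est pr /\
      {subset needed r est pr <= aux (loc (C K) i)}.
Proof.
move=> HB i nf.
have := @fin_max (fun j K => j \notin faulty ->
    exists est pr, (j, r, est) \in aux (loc (C K) i) /\ is_valid t r est pr /\
      {subset needed r est pr <= aux (loc (C K) i)}) (enum 'I_n).
case=> [j k k' hk H jf|j _|K HK]; last by exists K => j; apply: HK; rewrite mem_enum.
  case: (H jf) => est [pr [A [B D]]]; exists est, pr.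
  case: (mono i hk) => [M _]; split; first exact: M.
  by split=> // x /D /M.
case: (boolP (j \in faulty)) => jf; first by exists 0.
case: (HB j jf) => k [pl [est [E [V Hn]]]].
have V' : is_valid t (mround pl.1) (mval pl.1) pl.2 by rewrite E.
case: (deliver (Hn i) nf V') => k' [A D].
exists k' => _; exists est, pl.2; rewrite -E; split=> //; split=> //.
by move: D; rewrite E.
Qed.

Lemma nsig_nf (S : seq (smsg n)) (P : smsg n -> bool) :
  (forall j, j \notin faulty -> has (fun m => (signer m == j) && P m) S) ->
  n - t <= nsigners S P.
Proof.
move=> H; apply: leq_trans (_ : #|~: faulty| <= _).
  by rewrite cardsCs setCK card_ord; apply: leq_sub2l.
apply: subset_leq_card; apply/subsetP => j; rewrite !inE => jf.
exact: H.
Qed.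


Lemma valid_next m b (pr : seq (smsg n)) : b = odd m.+1 -> is_valid t m.+1 b pr ->
  is_valid t m.+2 b (needed m.+1 b pr).
Proof.
move=> ->; case: m => [|m].
  rewrite /is_valid /needed /relevant /= /has_from => V.
  by rewrite nsigners_filter ?V // => x.
rewrite /is_valid /needed /relevant /=.
have -> : m.+3 - 2 = m.+1 by lia.
case: (odd m) => /=; rewrite /has_from => V; by rewrite nsigners_filter.
Qed.



Lemma values r : 0 < r -> (forall j, j \notin faulty -> Bc j r.-1) ->
  forall i, i \notin faulty -> exists k v, @in_values n t (loc (C k) i) r v.
Proof.
case: r => [//|m] _ HB i nf; case: (collect HB nf) => K HK; exists K.
have Hnf : n - t <= #|~: faulty|.
  by rewrite cardsCs setCK card_ord; apply: leq_sub2l.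
case: m HB HK => [|m] HB HK /=.
  pose T b := [set j | has (fun x => (signer x == j) && ((mround x == 0) && (mval x == b)))
                          (aux (loc (C K) i))].
  have Hsub : #|~: faulty| <= #|T false| + #|T true|.
    apply: leq_trans (_ : #|T false :|: T true| <= _); last by rewrite cardsU leq_subr.
    apply: subset_leq_card; apply/subsetP => j; rewrite inE => jf.
    case: (HK j jf) => est [pr [A _]]; rewrite inE; apply/orP.
    have Hj : j \in T est.
      by rewrite inE; apply/hasP; exists (j, 0, est) => //=; rewrite !eqxx.
    by case: est A Hj => _; [right|left].
  have [v Hv] : exists v, t.+1 <= #|T v|.
    case: (leqP t.+1 #|T false|) => h1; first by exists false.
    case: (leqP t.+1 #|T true|) => h2; first by exists true.
    exfalso; lia.
  by exists v, (aux (loc (C K) i)); split.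
case: (classic (exists j pr, j \notin faulty /\ is_valid t m.+1 (odd m.+1) pr /\
          {subset needed m.+1 (odd m.+1) pr <= aux (loc (C K) i)})).
  case=> j [pr [_ [V Hs]]]; exists (odd m.+1), (needed m.+1 (odd m.+1) pr).
  by split=> //; exact: valid_next.
move=> Hno.
have Hc : n - t <= nsigners (aux (loc (C K) i))
                     (fun x => (mround x == m.+1) && (mval x == ~~ odd m.+1)).
  apply: nsig_nf => j jf.
  case: (HK j jf) => est [pr [A [V Hs]]].
  have Hest : est = ~~ odd m.+1.
    case: (boolP (est == odd m.+1)) => [/eqP E|]; last by case: est {A V Hs}; case: (odd m.+1).
    by exfalso; apply: Hno; exists j, pr; rewrite -E.
  by apply/hasP; exists (j, m.+1, est) => //=; rewrite Hest !eqxx.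
exists (~~ odd m.+1), (aux (loc (C K) i)); split=> //.
by move: Hc; rewrite /is_valid /= /has_from; case: (odd m).
Qed.


Lemma pos_init s : inv s -> pos s = 3 -> pc s = PInit.
Proof.
case=> _ [_ H]; move: H; rewrite /pos; case: (pc s) => //= H h; exfalso.
- lia.
- have := H (or_introl erefl); lia.
- have := H (or_intror (or_introl erefl)); lia.
- have := H (or_intror (or_intror erefl)); lia.
Qed.
Lemma pos_start s r : pos s = 4 * r + 4 -> pc s = PStart /\ rnd s = r.
Proof. by rewrite /pos; case: (pc s) => /= h; try (split; [done|lia]); exfalso; lia. Qed.
Lemma pos_w1 s r : pos s = 4 * r + 1 -> pc s = PWait1 /\ rnd s = r.
Proof. by rewrite /pos; case: (pc s) => /= h; try (split; [done|lia]); exfalso; lia. Qed.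
Lemma pos_w2 s r : pos s = 4 * r + 2 -> pc s = PWait2 /\ rnd s = r.
Proof. by rewrite /pos; case: (pc s) => /= h; try (split; [done|lia]); exfalso; lia. Qed.
Lemma pos_w3 s r : pos s = 4 * r.+1 + 3 -> pc s = PWait3 /\ rnd s = r.+1.
Proof. by rewrite /pos; case: (pc s) => /= h; try (split; [done|lia]); exfalso; lia. Qed.

Lemma bc_of j k s r pl : @bcast n t j s r pl ->
  net (C k.+1) = net (C k) ++ bcast_packets j pl -> Bc j r.
Proof.
move=> [est [_ [E1 [_ V]]]] Hn; exists k.+1, pl, est; split=> //; split=> //.
move=> i; rewrite Hn mem_cat; apply/orP; right.
by apply/mapP; exists i => //; rewrite mem_enum.
Qed.

Definition Ind r := (forall j, j \notin faulty -> exists k, 4 * r + 4 <= pos (loc (C k) j)) /\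
   (forall j, j \notin faulty -> Bc j r).

Lemma ind0 : Ind 0.
Proof.
have R4 : forall j, j \notin faulty -> exists k, 4 * 0 + 4 <= pos (loc (C k) j).
  move=> j jf; have [k hk] : exists k, 3 < pos (loc (C k) j).
    apply: (@advance j 3 jf); first by exists 0; rewrite H0.
    move=> _ _; exists 0 => k' _ /(pos_init (inv_all k' j)) hpc.
    by rewrite /lenabled /lstep hpc; eauto.
  by exists k.
split=> // j jf.
have [k [out [hp [Hl Hn]]]] := @crossing j 4 erefl (R4 j jf).
move: Hl; rewrite /lstep (pos_init (inv_all k j) hp) => -[_ Eo]; rewrite Eo in Hn.
exists k.+1, ((j, 0, prop j), [::]), (prop j); split=> //; split=> //.
move=> i; rewrite Hn mem_cat; apply/orP; right.
by apply/mapP; exists i => //; rewrite mem_enum.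
Qed.

Lemma ind_step r : Ind r -> Ind r.+1.
Proof.
move=> [HR HB].
have V := @values r.+1 erefl HB.
have e5 : 4 * r + 5 = 4 * r.+1 + 1 by lia.
have e6 : 4 * r + 6 = 4 * r.+1 + 2 by lia.
have e7 : 4 * r + 7 = 4 * r.+1 + 3 by lia.
have d5 : (4 * r + 5).-1 = 4 * r + 4 by lia.
have d6 : (4 * r + 6).-1 = 4 * r.+1 + 1 by lia.
have q5 : 3 < 4 * r + 5 by lia.
have q6 : 3 < 4 * r + 6 by lia.
have Ra : forall j, j \notin faulty -> exists k, 4 * r + 5 <= pos (loc (C k) j).
  move=> j jf; have [k hk] : exists k, (4 * r + 4) < pos (loc (C k) j).
    apply: (@advance j (4 * r + 4) jf (HR j jf)).
    move=> _ _; have [kV [v Hv]] := V j jf; exists kV => k' hk' /pos_start [hpc hr].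
    rewrite /lenabled /lstep hpc.
    case hc: (is_coord j (rnd (loc (C k') j)).+1); last first.
      by do 2 eexists; split; [reflexivity|rewrite /=; reflexivity].
    have [pl Hpl] : exists pl, @bcast n t j (loc (C k') j) (rnd (loc (C k') j)).+1 pl.
      apply: bcast_ex; exists v; rewrite hr; apply: in_values_mono Hv.
      by case: (mono j hk') => [M _].
    do 2 eexists; split; first reflexivity.
    by rewrite /=; exists pl; split; [exact: Hpl|reflexivity].
  by exists k; rewrite -addn4 addnS.
have Rb : forall j, j \notin faulty -> exists k, 4 * r + 6 <= pos (loc (C k) j).
  move=> j jf; have [k hk] : exists k, (4 * r + 5) < pos (loc (C k) j).
    apply: (@advance j (4 * r + 5) jf (Ra j jf)).
    move=> k0 hk0; have [kV [v Hv]] := V j jf.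
    have [hpc hr] := @pos_w1 (loc (C k0) j) r.+1 (etrans hk0 e5).
    have [st _] := inv_all k0 j; have := st hpc; rewrite hr => st'.
    have [k2 [hk2 ex]] := @Htimer k0 j _ jf st'.
    exists (maxn k2 kV) => k' hk' hp'.
    have [hpc' hr'] := @pos_w1 (loc (C k') j) r.+1 (etrans hp' e5).
    rewrite /lenabled /lstep hpc' hr'.
    have ex' : expired (loc (C k') j) (2 * r.+1).
      by case: (mono j (leq_trans (leq_maxl k2 kV) hk')) => [_ [M _]]; apply: M.
    case hc: (is_coord j r.+1).
      by do 2 eexists; split=> //; split=> //.
    have [pl Hpl] : exists pl, @bcast n t j (loc (C k') j) r.+1 pl.
      apply: bcast_ex; exists v; apply: in_values_mono Hv.
      by case: (mono j (leq_trans (leq_maxr k2 kV) hk')) => [M _].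
    do 2 eexists; split=> //; split; first reflexivity.
    by rewrite /=; exists pl; split; [exact: Hpl|reflexivity].
  by exists k; lia.
have Bn : forall j, j \notin faulty -> Bc j r.+1.
  move=> j jf; case hc: (is_coord j r.+1).
    have [k [out [hp [Hl Hn]]]] := @crossing j (4 * r + 5) q5 (Ra j jf).
    have [hpc hr] := @pos_start (loc (C k) j) r (etrans hp d5).
    move: Hl; rewrite /lstep hpc hr hc => -[_ [pl [Hb Eo]]]; rewrite Eo in Hn.
    exact: bc_of Hb Hn.
  have [k [out [hp [Hl Hn]]]] := @crossing j (4 * r + 6) q6 (Rb j jf).
  have [hpc hr] := @pos_w1 (loc (C k) j) r.+1 (etrans hp d6).
  move: Hl; rewrite /lstep hpc hr hc => -[_ [_ [pl [Hb Eo]]]]; rewrite Eo in Hn.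
  exact: bc_of Hb Hn.
have Rd : forall j, j \notin faulty -> exists k, 4 * r + 7 <= pos (loc (C k) j).
  move=> j jf; have [k hk] : exists k, (4 * r + 6) < pos (loc (C k) j).
    apply: (@advance j (4 * r + 6) jf (Rb j jf)).
    move=> _ _; have [K HK] := collect Bn jf.
    exists K => k' hk' hp'.
    have [hpc' hr'] := @pos_w2 (loc (C k') j) r.+1 (etrans hp' e6).
    rewrite /lenabled /lstep hpc' hr'.
    exists (set_started (loc (C k') j) (2 * r.+1).+1 PWait3), None; split=> //.
    apply: nsig_nf => j' jf'; have [est [pr [A _]]] := HK j' jf'.
    apply/hasP; exists (j', r.+1, est); last by rewrite /= !eqxx.
    by case: (mono j hk') => [M _]; apply: M.
  by exists k; lia.
split=> // j jf; have [k hk] : exists k, (4 * r + 7) < pos (loc (C k) j).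
  apply: (@advance j (4 * r + 7) jf (Rd j jf)).
  move=> k0 hk0.
  have [hpc hr] := @pos_w3 (loc (C k0) j) r (etrans hk0 e7).
  have [_ [st _]] := inv_all k0 j; have := st hpc; rewrite hr => st'.
  have [k2 [hk2 ex]] := @Htimer k0 j _ jf st'.
  exists k2 => k' hk' hp'.
  have [hpc' hr'] := @pos_w3 (loc (C k') j) r (etrans hp' e7).
  rewrite /lenabled /lstep hpc' hr'.
  have ex' : expired (loc (C k') j) (2 * r.+1).+1.
    by case: (mono j hk') => [_ [M _]]; apply: M.
  by eauto.
by exists k; rewrite mulnS; lia.
Qed.

Lemma main_in r (i : 'I_n) : 0 < r -> i \notin faulty ->
  exists (k : nat) (v : bool) (S : seq (smsg n)),
    {subset S <= aux (loc (C k) i)} /\ is_valid t r v S.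
Proof.
case: r => [//|r] _ nf.
have HI : Ind r by elim: r => [|r IH]; [exact: ind0|exact: ind_step].
have [k [v [S [HS V]]]] := @values r.+1 erefl HI.2 i nf.
by exists k, v, S.
Qed.

End Proof.

Unset Implicit Arguments.

Theorem lemma4 (n t : nat) (faulty : {set 'I_n}) (prop : 'I_n -> bool)
    (C : nat -> config n) (lab : nat -> label n) :
  3 * t < n -> #|faulty| <= t -> @execution n t faulty prop C lab ->
  forall (r : nat) (i : 'I_n), 0 < r -> i \notin faulty ->
  exists (k : nat) (v : bool) (S : seq (smsg n)),
    {subset S <= aux (loc (C k) i)} /\ @is_valid n t r v S.
Proof.
move=> Hn3 Hf [H0 [Hs [Hd [Ht Hfa]]]] r i r0 nf.
exact: (main_in H0 Hs Hd Ht Hfa Hf Hn3 r0 nf).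
Qed.
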